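(* Let $n\ge1$, $\preceq$ an admissible order on $L([0,1])$, $F\colon L([0,1])^2\to L([0,1])$, $G\colon L([0,1])^n\to L([0,1])$. The IV Sugeno-like $FG$-functional $\mathbf S_m^{F,G}$ satisfies: (i) $\mathbf S_m^{F,G}\succeq\wedge$ for every IV fuzzy measure $m$ whenever (a) $F(X,\mathbf1)\succeq X$ for all $X$ and $G=f\circ\mathrm{Proj}_1$ for some $f\colon L([0,1])\to L([0,1])$ with $f\succeq \mathrm{Id}$; or (b) $F(X,\mathbf1)\succeq X$ for all $X$, $F$ is non-decreasing in the second variable and $G=f\circ\vee$ for some $f$ with $f\succeq\mathrm{Id}$; (ii) $\mathbf S_m^{F,G}\preceq\vee$ for every $m$ whenever (a) $F(X,\mathbf1)\preceq X$ for all $X$ and $G=f\circ\mathrm{Proj}_1$ with $f\preceq\mathrm{Id}$; or (b) $F(X,\mathbf1)\preceq X$ for all $X$, $F$ is non-decreasing in the second variable and $G=f\circ\vee$ with $f\preceq\mathrm{Id}$; (iii) $\mathbf S_m^{F,G}$ is internal for every $m$ whenever (a) $F(X,\mathbf1)=X$ for all $X$ and $G=\mathrm{Proj}_1$; or (b) $F(X,\mathbf1)=X$ for all $X$, $F$ is non-decreasing in the second variable and $G=\vee$.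
   Context: $N=\{1,\dots,n\}$. $L([0,1])=\{[a,b]:0\le a\le b\le1\}$, $\mathbf0=[0,0]$, $\mathbf1=[1,1]$. An admissible order $\preceq$ is a total order on $L([0,1])$ with $[a,b]\preceq[c,d]$ whenever $a\le c$, $b\le d$. $\vee,\wedge$ denote maximum and minimum w.r.t. $\preceq$; monotonicity is w.r.t. $\preceq$; $\mathrm{Proj}_1(X_1,\dots,X_n)=X_1$; $f\succeq\mathrm{Id}$ means $f(X)\succeq X$ for all $X$ (similarly $\preceq$). $\mathbf S\succeq\wedge$ means $\mathbf S(X_1,\dots,X_n)\succeq\wedge(X_1,\dots,X_n)$ for all inputs, similarly $\mathbf S\preceq\vee$; internal means both. An IV fuzzy measure w.r.t. $\preceq$ is $m\colon2^N\to L([0,1])$, $m(\emptyset)=\mathbf0$, $m(N)=\mathbf1$, $m(A)\preceq m(B)$ for $A\subseteq B$. For a permutation $\sigma$, $E_{\sigma(i)}=\{\sigma(i),\dots,\sigma(n)\}$. $\mathbf S_m^{F,G}(X_1,\dots,X_n)=G\big(F(X_{\sigma(1)},m(E_{\sigma(1)})),\dots,F(X_{\sigma(n)},m(E_{\sigma(n)}))\big)$ with $\sigma$ any permutation such that $X_{\sigma(1)}\preceq\dots\preceq X_{\sigma(n)}$; it is defined when this value does not depend on the choice of $\sigma$ for all inputs. *)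

(* Defs.v *)
From mathcomp Require Import all_boot all_order all_algebra.
From mathcomp Require Import reals.
From mathcomp Require Import fingroup perm.

Set Implicit Arguments. Unset Strict Implicit. Unset Printing Implicit Defensive.
Import Order.TTheory GRing.Theory Num.Theory.
Local Open Scope ring_scope.

Section IVDefs.
Variable R : realType.

(* L([0,1]) = { [a,b] : 0 <= a <= b <= 1 }, an interval represented by (a,b) *)
Definition ivpred (p : R * R) : bool := [&& 0 <= p.1, p.1 <= p.2 & p.2 <= 1].
Definition IV := {p : R * R | ivpred p}.
Definition lo (x : IV) : R := (sval x).1.
Definition hi (x : IV) : R := (sval x).2.

Lemma iv0_proof : ivpred (0, 0).
Proof. by rewrite /ivpred /= lexx ler01. Qed.
Lemma iv1_proof : ivpred (1, 1).
Proof. by rewrite /ivpred /= lexx ler01. Qed.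

Definition iv0 : IV := exist _ (0, 0) iv0_proof.
Definition iv1 : IV := exist _ (1, 1) iv1_proof.

Definition admissible (le : rel IV) : Prop :=
  [/\ reflexive le, antisymmetric le, transitive le, total le &
      forall x y, lo x <= lo y -> hi x <= hi y -> le x y].

(* maximum / minimum w.r.t. le of a finite family (0 is bottom, 1 is top
   for any admissible order, so these are the max/min for n >= 1) *)
Definition ivmaxs (le : rel IV) (s : seq IV) : IV :=
  foldl (fun a b => if le a b then b else a) iv0 s.
Definition ivmins (le : rel IV) (s : seq IV) : IV :=
  foldl (fun a b => if le a b then a else b) iv1 s.

Definition vee (le : rel IV) n (X : 'I_n -> IV) : IV :=
  ivmaxs le [seq X i | i <- enum 'I_n].
Definition wedge (le : rel IV) n (X : 'I_n -> IV) : IV :=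
  ivmins le [seq X i | i <- enum 'I_n].

(* Proj_1 (first coordinate, index 0 in 0-based indexing) *)
Definition proj1 n (hn : (0 < n)%N) (X : 'I_n -> IV) : IV := X (Ordinal hn).

Definition fuzzy_measure (le : rel IV) n (m : {set 'I_n} -> IV) : Prop :=
  [/\ m set0 = iv0, m setT = iv1 &
      forall A B : {set 'I_n}, A \subset B -> le (m A) (m B)].

Definition sorting (le : rel IV) n (X : 'I_n -> IV) (s : {perm 'I_n}) : Prop :=
  forall i j : 'I_n, (i <= j)%N -> le (X (s i)) (X (s j)).

Definition Eset n (s : {perm 'I_n}) (i : 'I_n) : {set 'I_n} :=
  [set s j | j : 'I_n & (i <= j)%N].

Definition sugeno_val n (F : IV -> IV -> IV) (G : ('I_n -> IV) -> IV)
  (m : {set 'I_n} -> IV) (X : 'I_n -> IV) (s : {perm 'I_n}) : IV :=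
  G (fun i => F (X (s i)) (m (Eset s i))).

(* S_m^{F,G} is defined: the value does not depend on the sorting permutation *)
Definition sugeno_defined (le : rel IV) n (F : IV -> IV -> IV)
  (G : ('I_n -> IV) -> IV) (m : {set 'I_n} -> IV) : Prop :=
  forall X s1 s2, sorting le X s1 -> sorting le X s2 ->
    sugeno_val F G m X s1 = sugeno_val F G m X s2.

Definition nondecr2 (le : rel IV) (F : IV -> IV -> IV) : Prop :=
  forall X Y Z, le Y Z -> le (F X Y) (F X Z).

Definition sugeno_ge_min (le : rel IV) n F (G : ('I_n -> IV) -> IV) : Prop :=
  forall m, fuzzy_measure le m -> sugeno_defined le F G m ->
  forall X s, sorting le X s -> le (wedge le X) (sugeno_val F G m X s).
Definition sugeno_le_max (le : rel IV) n F (G : ('I_n -> IV) -> IV) : Prop :=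
  forall m, fuzzy_measure le m -> sugeno_defined le F G m ->
  forall X s, sorting le X s -> le (sugeno_val F G m X s) (vee le X).

End IVDefs.

(* Main.v *)
Require Import Defs.
From mathcomp Require Import all_boot all_order all_algebra.
From mathcomp Require Import reals.
From mathcomp Require Import fingroup perm.

Set Implicit Arguments. Unset Strict Implicit. Unset Printing Implicit Defensive.
Import Order.TTheory GRing.Theory Num.Theory.
Local Open Scope ring_scope.

Section Aux.
Variable R : realType.
Variable le : rel (IV R).
Hypothesis adm : admissible le.

Let refl : reflexive le. Proof. by case: adm. Qed.
Let trans : transitive le. Proof. by case: adm. Qed.
Let tot : total le. Proof. by case: adm. Qed.

Lemma iv0_bot b : le (iv0 R) b.
Proof.
case: adm => _ _ _ _ H; apply: H; rewrite /lo /hi /=;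
case: b => [[a c]] /= /and3P [H1 H2 H3] //=.
exact: le_trans H2.
Qed.

Lemma foldl_min l a :
  le (foldl (fun a b => if le a b then a else b) a l) a /\
  forall x, x \in l -> le (foldl (fun a b => if le a b then a else b) a l) x.
Proof.
elim: l a => [|y l IH] a /=; first by split.
have [H1 H2] := IH (if le a y then a else y).
have Ha : le (if le a y then a else y) a.
  by case: ifP => h //; case/orP: (tot a y) => //; rewrite h.
have Hy : le (if le a y then a else y) y by case: ifP.
split; first exact: trans H1 Ha.
move=> x; rewrite inE => /orP [/eqP -> | xl]; last exact: H2.
exact: trans H1 Hy.
Qed.

Lemma foldl_max l a :
  le a (foldl (fun a b => if le a b then b else a) a l) /\
  forall x, x \in l -> le x (foldl (fun a b => if le a b then b else a) a l).
Proof.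
elim: l a => [|y l IH] a /=; first by split.
have [H1 H2] := IH (if le a y then y else a).
have Ha : le a (if le a y then y else a) by case: ifP.
have Hy : le y (if le a y then y else a).
  by case: ifP => h //; case/orP: (tot a y) => //; rewrite h.
split; first exact: trans H1.
move=> x; rewrite inE => /orP [/eqP -> | xl]; last exact: H2.
exact: trans H1.
Qed.

Lemma foldl_max_le l a b : le a b -> (forall x, x \in l -> le x b) ->
  le (foldl (fun a b => if le a b then b else a) a l) b.
Proof.
elim: l a => [|y l IH] a //= hab hl.
apply: IH; last by move=> x xl; apply: hl; rewrite inE xl orbT.
by case: ifP => _ //; apply: hl; rewrite inE eqxx.
Qed.

Lemma wedge_le n (X : 'I_n -> IV R) i : le (wedge le X) (X i).
Proof.
by apply: (foldl_min _ _).2; apply: map_f; rewrite mem_enum.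
Qed.

Lemma vee_ge n (Y : 'I_n -> IV R) i : le (Y i) (vee le Y).
Proof.
by apply: (foldl_max _ _).2; apply: map_f; rewrite mem_enum.
Qed.

Lemma vee_le n (Y : 'I_n -> IV R) b : (forall i, le (Y i) b) -> le (vee le Y) b.
Proof.
move=> H; apply: foldl_max_le; first exact: iv0_bot.
by move=> x /mapP [i _ ->].
Qed.

Lemma Eset0 n (hn : (0 < n)%N) (s : {perm 'I_n}) : Eset s (Ordinal hn) = setT.
Proof.
apply/setP => x; rewrite inE; apply/imsetP; exists (s^-1 x)%g.
  by rewrite inE.
by rewrite permKV.
Qed.

Lemma ge_gen n (hn : (0 < n)%N) F (G : ('I_n -> IV R) -> IV R) :
  (forall X, le X (F X (iv1 R))) -> (forall Y, le (Y (Ordinal hn)) (G Y)) ->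
  sugeno_ge_min le F G.
Proof.
move=> HF HG m [m0 m1 mm] _ X s _; rewrite /sugeno_val.
apply: trans (HG _); rewrite /= Eset0 m1.
exact: trans (wedge_le _ _) (HF _).
Qed.

Lemma le_gen_a n (hn : (0 < n)%N) F (G : ('I_n -> IV R) -> IV R) :
  (forall X, le (F X (iv1 R)) X) -> (forall Y, le (G Y) (Y (Ordinal hn))) ->
  sugeno_le_max le F G.
Proof.
move=> HF HG m [m0 m1 mm] _ X s _; rewrite /sugeno_val.
apply: trans (HG _) _; rewrite /= Eset0 m1.
exact: trans (HF _) (vee_ge _ _).
Qed.

Lemma le_gen_b n F (G : ('I_n -> IV R) -> IV R) :
  (forall X, le (F X (iv1 R)) X) -> nondecr2 le F ->
  (forall Y, le (G Y) (vee le Y)) ->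
  sugeno_le_max le F G.
Proof.
move=> HF Hnd HG m [m0 m1 mm] _ X s _; rewrite /sugeno_val.
apply: trans (HG _) _; apply: vee_le => i.
apply: trans (Hnd _ _ (iv1 R) _) _; first by rewrite -m1; apply: mm; apply: subsetT.
exact: trans (HF _) (vee_ge _ _).
Qed.

End Aux.

Theorem proposition4 (R : realType) (n : nat) (hn : (0 < n)%N)
  (le : rel (IV R)) (F : IV R -> IV R -> IV R) (G : ('I_n -> IV R) -> IV R) :
  admissible le ->
  [/\ (* (i) *)
      ((forall X, le X (F X (iv1 R))) /\
         (exists f : IV R -> IV R, (forall X, le X (f X)) /\
            G = (fun X => f (proj1 hn X)))
       \/ (forall X, le X (F X (iv1 R))) /\ nondecr2 le F /\
         (exists f : IV R -> IV R, (forall X, le X (f X)) /\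
            G = (fun X => f (vee le X)))) ->
      sugeno_ge_min le F G,
      (* (ii) *)
      ((forall X, le (F X (iv1 R)) X) /\
         (exists f : IV R -> IV R, (forall X, le (f X) X) /\
            G = (fun X => f (proj1 hn X)))
       \/ (forall X, le (F X (iv1 R)) X) /\ nondecr2 le F /\
         (exists f : IV R -> IV R, (forall X, le (f X) X) /\
            G = (fun X => f (vee le X)))) ->
      sugeno_le_max le F G
    & (* (iii) *)
      ((forall X, F X (iv1 R) = X) /\ G = proj1 hn
       \/ (forall X, F X (iv1 R) = X) /\ nondecr2 le F /\ G = @vee R le n) ->
      sugeno_ge_min le F G /\ sugeno_le_max le F G].
Proof.
move=> adm; have refl : reflexive le by case: adm.
have trans : transitive le by case: adm.
split.
- case=> [[HF [f [Hf ->]]] | [HF [_ [f [Hf ->]]]]].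
    by apply: (@ge_gen _ _ adm _ hn) => // Y; exact: Hf.
  apply: (@ge_gen _ _ adm _ hn) => // Y; apply: trans (Hf _); exact: vee_ge.
- case=> [[HF [f [Hf ->]]] | [HF [Hnd [f [Hf ->]]]]].
    by apply: (@le_gen_a _ _ adm _ hn) => // Y; exact: Hf.
  by apply: (le_gen_b adm) => // Y; exact: Hf.
- case=> [[HF ->] | [HF [Hnd ->]]]; split.
  + by apply: (@ge_gen _ _ adm _ hn) => [X|Y]; rewrite ?HF //; exact: refl.
  + by apply: (@le_gen_a _ _ adm _ hn) => [X|Y]; rewrite ?HF //; exact: refl.
  + by apply: (@ge_gen _ _ adm _ hn) => [X|Y]; rewrite ?HF //; apply: vee_ge.
  + by apply: (le_gen_b adm) => [X|//|Y]; rewrite ?HF //; exact: refl.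
Qed.
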